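(* Let $\kappa$ be a regular cardinal and let $\mathsf A$ be a $\kappa$-accessible additive category endowed with a locally $\kappa$-coherent exact structure. Then the full subcategory $\mathsf A_{<\kappa}\subset\mathsf A$ of $\kappa$-presentable objects is closed under extensions in $\mathsf A$; hence $\mathsf A_{<\kappa}$ inherits an exact category structure from $\mathsf A$.
   Context: Exact categories are in the sense of Quillen. An object $S$ is $\kappa$-presentable if $\operatorname{Hom}(S,-)$ preserves $\kappa$-directed colimits; a category is $\kappa$-accessible if it has $\kappa$-directed colimits and a set of $\kappa$-presentable objects of which every object is a $\kappa$-directed colimit. For a $\kappa$-accessible additive category $\mathsf A$, an exact structure on $\mathsf A$ is locally $\kappa$-coherent if its admissible short exact sequences are precisely the $\kappa$-directed colimits (in the category of three-term complexes in $\mathsf A$) of admissible short exact sequences whose three terms are $\kappa$-presentable. *)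

(* Defs.v *)
From HB Require Import structures.
From mathcomp Require Import all_boot all_algebra.
Set Implicit Arguments. Unset Strict Implicit. Unset Printing Implicit Defensive.
Import GRing.Theory.
Local Open Scope ring_scope.

(* Cardinals.  A cardinal kappa is represented by a type K of          *)
(* cardinality kappa.                                                  *)

Definition card_lt (X K : Type) : Prop :=
  (exists f : X -> K, injective f) /\ ~ (exists g : K -> X, injective g).

Definition regular_cardinal (K : Type) : Prop :=
  (exists f : nat -> K, injective f) /\
  forall (X : Type) (F : X -> Type),
    card_lt X K -> (forall x, card_lt (F x) K) -> card_lt {x : X & F x} K.

Record CatData := {
  cObj :> Type;
  cHom : cObj -> cObj -> Type;
  cid : forall X, cHom X X;
  ccomp : forall X Y Z, cHom Y Z -> cHom X Y -> cHom X Z }.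
Arguments cid {C} X : rename.
Arguments ccomp {C X Y Z} : rename.

Definition is_iso (C : CatData) (X Y : C) (f : cHom X Y) : Prop :=
  exists g : cHom Y X, ccomp g f = cid X /\ ccomp f g = cid Y.

Record Diagram (C : CatData) := {
  Idx : Type;
  dle : Idx -> Idx -> Prop;
  dob : Idx -> C;
  dmap : forall i j, dle i j -> cHom (dob i) (dob j) }.
Arguments Idx {C}. Arguments dle {C}. Arguments dob {C}. Arguments dmap {C} d {i j}.

Definition is_diagram (C : CatData) (D : Diagram C) : Prop :=
  (forall i, dle D i i) /\
  (forall i j k, dle D i j -> dle D j k -> dle D i k) /\
  (forall i (p : dle D i i), dmap D p = cid (dob D i)) /\
  (forall i j k (p : dle D i j) (q : dle D j k) (r : dle D i k),
      ccomp (dmap D q) (dmap D p) = dmap D r).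

(* kappa-directed: every family of fewer than kappa indices has an upper
   bound (in particular the index set is nonempty). *)
Definition kdirected (K : Type) (C : CatData) (D : Diagram C) : Prop :=
  forall (X : Type) (x : X -> Idx D), card_lt X K ->
    exists u, forall a, dle D (x a) u.

Definition is_cocone (C : CatData) (D : Diagram C) (L : C)
  (iota : forall i, cHom (dob D i) L) : Prop :=
  forall i j (p : dle D i j), ccomp (iota j) (dmap D p) = iota i.

Definition is_colimit (C : CatData) (D : Diagram C) (L : C)
  (iota : forall i, cHom (dob D i) L) : Prop :=
  is_cocone iota /\
  forall (M : C) (mu : forall i, cHom (dob D i) M), is_cocone mu ->
    exists h : cHom L M, (forall i, ccomp h (iota i) = mu i) /\
      forall h' : cHom L M, (forall i, ccomp h' (iota i) = mu i) -> h' = h.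

Definition kdirected_diagram (K : Type) (C : CatData) (D : Diagram C) :=
  is_diagram D /\ kdirected K D.

(* S is kappa-presentable: Hom(S,-) preserves kappa-directed colimits,
   i.e. the canonical map colim_i Hom(S, D i) -> Hom(S, colim D) is a
   bijection (colimit in Set of a directed diagram, written out). *)
Definition presentable (K : Type) (C : CatData) (S : C) : Prop :=
  forall (D : Diagram C) (L : C) (iota : forall i, cHom (dob D i) L),
    kdirected_diagram K D -> is_colimit iota ->
    (forall f : cHom S L, exists i (g : cHom S (dob D i)), f = ccomp (iota i) g) /\
    (forall i i' (g : cHom S (dob D i)) (g' : cHom S (dob D i')),
        ccomp (iota i) g = ccomp (iota i') g' ->
        exists j (p : dle D i j) (p' : dle D i' j),
          ccomp (dmap D p) g = ccomp (dmap D p') g').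

Definition accessible (K : Type) (C : CatData) : Prop :=
  (forall D : Diagram C, kdirected_diagram K D ->
     exists (L : C) (iota : forall i, cHom (dob D i) L), is_colimit iota) /\
  exists (J : Type) (G : J -> C),
    (forall j, presentable K (G j)) /\
    forall X : C, exists (D : Diagram C) (iota : forall i, cHom (dob D i) X),
      kdirected_diagram K D /\
      (forall i, exists j (u : cHom (dob D i) (G j)), is_iso u) /\
      is_colimit iota.

Record PreAddCat := {
  aObj :> Type;
  aHom : aObj -> aObj -> zmodType;
  aid : forall X, aHom X X;
  acomp : forall X Y Z, aHom Y Z -> aHom X Y -> aHom X Z;
  acompA : forall X Y Z W (h : aHom Z W) (g : aHom Y Z) (f : aHom X Y),
      acomp h (acomp g f) = acomp (acomp h g) f;
  acomp1 : forall X Y (f : aHom X Y), acomp f (aid X) = f;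
  acomp1l : forall X Y (f : aHom X Y), acomp (aid Y) f = f;
  acompDl : forall X Y Z (h1 h2 : aHom Y Z) (g : aHom X Y),
      acomp (h1 + h2) g = acomp h1 g + acomp h2 g;
  acompDr : forall X Y Z (h : aHom Y Z) (g1 g2 : aHom X Y),
      acomp h (g1 + g2) = acomp h g1 + acomp h g2 }.
Arguments aid {A} X : rename.
Arguments acomp {A X Y Z} : rename.

Definition catOf (A : PreAddCat) : CatData :=
  {| cObj := aObj A; cHom := fun X Y => (@aHom A X Y : Type);
     cid := @aid A; ccomp := @acomp A |}.
Coercion catOf : PreAddCat >-> CatData.

Definition additive (A : PreAddCat) : Prop :=
  (exists Z : A, forall X : A,
      (forall f : @aHom A X Z, f = 0) /\ (forall f : @aHom A Z X, f = 0)) /\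
  (forall X Y : A, exists (P : A) (i1 : @aHom A X P) (i2 : @aHom A Y P)
      (p1 : @aHom A P X) (p2 : @aHom A P Y),
      acomp p1 i1 = aid X /\ acomp p2 i2 = aid Y /\
      acomp p1 i2 = 0 /\ acomp p2 i1 = 0 /\
      acomp i1 p1 + acomp i2 p2 = aid P).

Record Tri (A : PreAddCat) := {
  t1 : A; t2 : A; t3 : A;
  tf : @aHom A t1 t2; tg : @aHom A t2 t3;
  tz : acomp tg tf = 0 }.
Arguments t1 {A}. Arguments t2 {A}. Arguments t3 {A}.
Arguments tf {A}. Arguments tg {A}. Arguments tz {A}.

Record TriHom (A : PreAddCat) (T T' : Tri A) := {
  m1 : @aHom A (t1 T) (t1 T');
  m2 : @aHom A (t2 T) (t2 T');
  m3 : @aHom A (t3 T) (t3 T');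
  mc1 : acomp (tf T') m1 = acomp m2 (tf T);
  mc2 : acomp (tg T') m2 = acomp m3 (tg T) }.
Arguments m1 {A T T'}. Arguments m2 {A T T'}. Arguments m3 {A T T'}.

Definition TriId (A : PreAddCat) (T : Tri A) : TriHom T T.
Proof.
refine {| m1 := aid (t1 T); m2 := aid (t2 T); m3 := aid (t3 T) |};
  by rewrite acomp1 acomp1l.
Defined.

Definition TriComp (A : PreAddCat) (T T' T'' : Tri A)
  (n : TriHom T' T'') (m : TriHom T T') : TriHom T T''.
Proof.
refine {| m1 := acomp (m1 n) (m1 m); m2 := acomp (m2 n) (m2 m);
          m3 := acomp (m3 n) (m3 m) |}.
- by rewrite acompA (mc1 n) -!acompA (mc1 m).
- by rewrite acompA (mc2 n) -!acompA (mc2 m).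
Defined.

Definition TriCat (A : PreAddCat) : CatData :=
  {| cObj := Tri A; cHom := @TriHom A; cid := @TriId A; ccomp := @TriComp A |}.

Definition mkTri (A : PreAddCat) (X Y Z : A) (f : @aHom A X Y) (g : @aHom A Y Z)
  (h : acomp g f = 0) : Tri A := Build_Tri h.

(* Exact structures (Quillen; axioms as in Buehler, "Exact categories") *)

Definition is_kernel (A : PreAddCat) (X Y Z : A) (f : @aHom A X Y) (g : @aHom A Y Z) :=
  acomp g f = 0 /\
  forall (W : A) (h : @aHom A W Y), acomp g h = 0 ->
    exists u : @aHom A W X, acomp f u = h /\
      forall u' : @aHom A W X, acomp f u' = h -> u' = u.

Definition is_cokernel (A : PreAddCat) (X Y Z : A) (g : @aHom A Y Z) (f : @aHom A X Y) :=
  acomp g f = 0 /\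
  forall (W : A) (h : @aHom A Y W), acomp h f = 0 ->
    exists u : @aHom A Z W, acomp u g = h /\
      forall u' : @aHom A Z W, acomp u' g = h -> u' = u.

Definition is_pushout (A : PreAddCat) (X B X' P : A)
  (i : @aHom A X B) (f : @aHom A X X') (i' : @aHom A X' P) (f' : @aHom A B P) :=
  acomp i' f = acomp f' i /\
  forall (Q : A) (u : @aHom A X' Q) (v : @aHom A B Q), acomp u f = acomp v i ->
    exists w : @aHom A P Q, (acomp w i' = u /\ acomp w f' = v) /\
      forall w' : @aHom A P Q, acomp w' i' = u /\ acomp w' f' = v -> w' = w.

Definition is_pullback (A : PreAddCat) (Y C Y' P : A)
  (p : @aHom A Y C) (f : @aHom A Y' C) (p' : @aHom A P Y') (f' : @aHom A P Y) :=
  acomp f p' = acomp p f' /\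
  forall (Q : A) (u : @aHom A Q Y') (v : @aHom A Q Y), acomp f u = acomp p v ->
    exists w : @aHom A Q P, (acomp p' w = u /\ acomp f' w = v) /\
      forall w' : @aHom A Q P, acomp p' w' = u /\ acomp f' w' = v -> w' = w.

Definition adm_mono (A : PreAddCat) (E : Tri A -> Prop) (X Y : A) (f : @aHom A X Y) :=
  exists (Z : A) (g : @aHom A Y Z) (h : acomp g f = 0), E (mkTri h).

Definition adm_epi (A : PreAddCat) (E : Tri A -> Prop) (Y Z : A) (g : @aHom A Y Z) :=
  exists (X : A) (f : @aHom A X Y) (h : acomp g f = 0), E (mkTri h).

Definition tri_iso (A : PreAddCat) (T T' : Tri A) : Prop :=
  exists m : TriHom T T',
    is_iso (C := catOf A) (m1 m) /\ is_iso (C := catOf A) (m2 m) /\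
    is_iso (C := catOf A) (m3 m).

Definition exact_structure (A : PreAddCat) (E : Tri A -> Prop) : Prop :=
  (forall T, E T -> is_kernel (tf T) (tg T) /\ is_cokernel (tg T) (tf T)) /\
  (forall T T', tri_iso T T' -> E T -> E T') /\
  (forall X : A, adm_mono E (aid X)) /\
  (forall X : A, adm_epi E (aid X)) /\
  (forall (X Y Z : A) (f : @aHom A X Y) (g : @aHom A Y Z),
      adm_mono E f -> adm_mono E g -> adm_mono E (acomp g f)) /\
  (forall (X Y Z : A) (f : @aHom A X Y) (g : @aHom A Y Z),
      adm_epi E f -> adm_epi E g -> adm_epi E (acomp g f)) /\
  (forall (X B X' : A) (i : @aHom A X B) (f : @aHom A X X'), adm_mono E i ->
      exists (P : A) (i' : @aHom A X' P) (f' : @aHom A B P),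
        is_pushout i f i' f' /\ adm_mono E i') /\
  (forall (Y C Y' : A) (p : @aHom A Y C) (f : @aHom A Y' C), adm_epi E p ->
      exists (P : A) (p' : @aHom A P Y') (f' : @aHom A P Y),
        is_pullback p f p' f' /\ adm_epi E p').

Definition locally_coherent (K : Type) (A : PreAddCat) (E : Tri A -> Prop) : Prop :=
  forall T : Tri A,
    E T <->
    exists (D : Diagram (TriCat A)) (iota : forall i, @cHom (TriCat A) (dob D i) T),
      kdirected_diagram K D /\
      (forall i, E (dob D i) /\ presentable K (C := catOf A) (t1 (dob D i)) /\
                 presentable K (C := catOf A) (t2 (dob D i)) /\
                 presentable K (C := catOf A) (t3 (dob D i))) /\
      is_colimit iota.

(* Main.v *)
Require Import Defs.
From mathcomp Require Import all_boot all_algebra.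
From HB Require Import structures.
Set Implicit Arguments. Unset Strict Implicit. Unset Printing Implicit Defensive.
Local Open Scope ring_scope.

Module PLHelpers.
Import GRing.Theory.

Section Helpers.
Variable A : PreAddCat.

Lemma pl_acomp0r (X Y Z : A) (h : @aHom A Y Z) : acomp h (0 : @aHom A X Y) = 0.
Proof.
have := acompDr h (0 : @aHom A X Y) 0; rewrite addr0 => H.
by move/(congr1 (fun v => v - acomp h (0 : @aHom A X Y))): H; rewrite subrr addrK.
Qed.

Lemma pl_acomp0l (X Y Z : A) (g : @aHom A X Y) : acomp (0 : @aHom A Y Z) g = 0.
Proof.
have := acompDl (0 : @aHom A Y Z) 0 g; rewrite addr0 => H.
by move/(congr1 (fun v => v - acomp (0 : @aHom A Y Z) g)): H; rewrite subrr addrK.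
Qed.

Lemma pl_acompNr (X Y Z : A) (h : @aHom A Y Z) (g : @aHom A X Y) : acomp h (- g) = - acomp h g.
Proof.
apply/eqP; rewrite -addr_eq0 addrC -acompDr subrr; exact/eqP/pl_acomp0r.
Qed.

Lemma pl_acompNl (X Y Z : A) (h : @aHom A Y Z) (g : @aHom A X Y) : acomp (- h) g = - acomp h g.
Proof.
apply/eqP; rewrite -addr_eq0 addrC -acompDl subrr; exact/eqP/pl_acomp0l.
Qed.

Lemma pl_acompBr (X Y Z : A) (h : @aHom A Y Z) (g1 g2 : @aHom A X Y) :
  acomp h (g1 - g2) = acomp h g1 - acomp h g2.
Proof. by rewrite acompDr pl_acompNr. Qed.

Lemma pl_acompBl (X Y Z : A) (h1 h2 : @aHom A Y Z) (g : @aHom A X Y) :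
  acomp (h1 - h2) g = acomp h1 g - acomp h2 g.
Proof. by rewrite acompDl pl_acompNl. Qed.

Lemma pl_tri_eta (T : Tri A) : T = mkTri (tz T).
Proof. by case: T. Qed.

Lemma pl_trihom_eq (T T' : Tri A) (h h' : TriHom T T') :
  m1 h = m1 h' -> m2 h = m2 h' -> m3 h = m3 h' -> h = h'.
Proof.
case: h => a b c e1 e2; case: h' => a' b' c' e1' e2' /= E1 E2 E3; subst.
by congr Build_TriHom; apply: eq_irrelevance.
Qed.

Definition pl_S1 (M : A) : Tri A := @mkTri A M M M 0 0 (@pl_acomp0l M M M 0).
Definition pl_S3 (M : A) : Tri A := @mkTri A M M M 0 (aid M) (@pl_acomp0r M M M (aid M)).

Definition pl_to1 (T : Tri A) (M : A) (mu : @aHom A (t1 T) M) : TriHom T (pl_S1 M).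
Proof.
refine (@Build_TriHom A T (pl_S1 M) mu 0 0 _ _); by rewrite /= !pl_acomp0l.
Defined.

Definition pl_to3 (T : Tri A) (M : A) (mu : @aHom A (t3 T) M) : TriHom T (pl_S3 M).
Proof.
refine (@Build_TriHom A T (pl_S3 M) 0 (acomp mu (tg T)) mu _ _).
- by rewrite /= pl_acomp0l -acompA tz pl_acomp0r.
- by rewrite /= acomp1l.
Defined.

Definition pl_D1 (D : Diagram (TriCat A)) : Diagram (catOf A) :=
  @Build_Diagram (catOf A) (Idx D) (dle D) (fun i => (t1 (dob D i) : catOf A))
     (fun i j p => m1 (dmap D p)).
Definition pl_D3 (D : Diagram (TriCat A)) : Diagram (catOf A) :=
  @Build_Diagram (catOf A) (Idx D) (dle D) (fun i => (t3 (dob D i) : catOf A))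
     (fun i j p => m3 (dmap D p)).

Lemma pl_dir1 K (D : Diagram (TriCat A)) : kdirected_diagram K D -> kdirected_diagram K (pl_D1 D).
Proof.
move=> [[r [tr [id cmp]]] kd]; split; last exact: kd.
split=> //; split=> //; split.
- by move=> i p /=; rewrite (id i p).
- by move=> i j k p q r0 /=; rewrite -(cmp i j k p q r0).
Qed.

Lemma pl_dir3 K (D : Diagram (TriCat A)) : kdirected_diagram K D -> kdirected_diagram K (pl_D3 D).
Proof.
move=> [[r [tr [id cmp]]] kd]; split; last exact: kd.
split=> //; split=> //; split.
- by move=> i p /=; rewrite (id i p).
- by move=> i j k p q r0 /=; rewrite -(cmp i j k p q r0).
Qed.

Lemma pl_col1 (D : Diagram (TriCat A)) (T : Tri A)
  (iota : forall i, @cHom (TriCat A) (dob D i) T) :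
  is_colimit iota -> is_colimit (C := catOf A) (D := pl_D1 D) (fun i => m1 (iota i)).
Proof.
move=> [Hco Hu]; split.
- by move=> i j p /=; have := congr1 m1 (Hco i j p).
- move=> M mu Hmu.
  have Hc : is_cocone (C := TriCat A) (fun i => pl_to1 (T := dob D i) (mu i)).
    by move=> i j p; apply: pl_trihom_eq => /=; rewrite ?pl_acomp0l //; exact: (Hmu i j p).
  have [h [Hh Hhu]] := Hu (pl_S1 M) _ Hc.
  exists (m1 h); split.
    by move=> i; have := congr1 m1 (Hh i).
  move=> h' Hh'.
  have E : pl_to1 (T := T) h' = h.
    apply: Hhu => i; apply: pl_trihom_eq => /=; rewrite ?pl_acomp0l //; exact: Hh'.
  by rewrite -E.
Qed.

Lemma pl_col3 (D : Diagram (TriCat A)) (T : Tri A)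
  (iota : forall i, @cHom (TriCat A) (dob D i) T) :
  is_colimit iota -> is_colimit (C := catOf A) (D := pl_D3 D) (fun i => m3 (iota i)).
Proof.
move=> [Hco Hu]; split.
- by move=> i j p /=; have := congr1 m3 (Hco i j p).
- move=> M mu Hmu.
  have Hc : is_cocone (C := TriCat A) (fun i => pl_to3 (T := dob D i) (mu i)).
    move=> i j p; apply: pl_trihom_eq => /=; rewrite ?pl_acomp0l //.
      rewrite -acompA (mc2 (dmap D p)) acompA; congr acomp; exact: (Hmu i j p).
    exact: Hmu.
  have [h [Hh Hhu]] := Hu (pl_S3 M) _ Hc.
  exists (m3 h); split.
    by move=> i; have := congr1 m3 (Hh i).
  move=> h' Hh'.
  have E : pl_to3 (T := T) h' = h.
    apply: Hhu => i; apply: pl_trihom_eq => /=; rewrite ?pl_acomp0l //.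
      rewrite -acompA (mc2 (iota i)) acompA; congr acomp; exact: Hh'.
    exact: Hh'.
  by rewrite -E.
Qed.

Lemma pl_presentable_retract K (P Y : A) (e : @aHom A Y P) (r : @aHom A P Y) :
  acomp r e = aid Y -> presentable K (C := catOf A) P -> presentable K (C := catOf A) Y.
Proof.
move=> Hre HP D L iota Hd Hc; have [H1 H2] := HP D L iota Hd Hc; split.
- move=> f; have [i [g Hg]] := H1 (acomp f r).
  exists i, (acomp g e); rewrite /=; simpl in Hg.
  by rewrite acompA -Hg -acompA Hre acomp1.
- move=> i i' g g' /= Hgg.
  have := H2 i i' (acomp g r) (acomp g' r); rewrite /= !acompA Hgg => /(_ erefl).
  move=> [j [p [p' Hj]]]; exists j, p, p'.
  have := congr1 (fun x => acomp x e) Hj; by rewrite /= -!acompA Hre !acomp1.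
Qed.

End Helpers.

Lemma pl_card_lt_bool K : regular_cardinal K -> card_lt bool K.
Proof.
move=> [[f finj] _]; split.
  exists (fun b : bool => f (nat_of_bool b)) => x y /finj; by case: x; case: y.
move=> [g ginj].
have hinj : forall n n', g (f n) = g (f n') -> n = n' by move=> n n' /ginj /finj.
case E0: (g (f 0%N)); case E1: (g (f 1%N)); case E2 : (g (f 2%N));
  first [ have := hinj 0%N 1%N; rewrite E0 E1 => /(_ erefl) //
        | have := hinj 0%N 2%N; rewrite E0 E2 => /(_ erefl) //
        | have := hinj 1%N 2%N; rewrite E1 E2 => /(_ erefl) // ].
Qed.

Lemma pl_dir2 K (C : CatData) (D : Diagram C) : regular_cardinal K -> kdirected K D ->
  forall i j, exists u, dle D i u /\ dle D j u.
Proof.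
move=> HK kd i j.
have [u Hu] := kd bool (fun b => if b then i else j) (pl_card_lt_bool HK).
by exists u; split; [exact: (Hu true) | exact: (Hu false)].
Qed.

End PLHelpers.
Import PLHelpers.

Theorem proposition1p3 (K : Type) (A : PreAddCat) (E : Tri A -> Prop) :
  regular_cardinal K ->
  additive A ->
  accessible K A ->
  exact_structure E ->
  locally_coherent K E ->
  forall T : Tri A, E T ->
    presentable K (C := catOf A) (t1 T) ->
    presentable K (C := catOf A) (t3 T) ->
    presentable K (C := catOf A) (t2 T).
Proof.
move=> HK _ _ Hex Hcoh T HT HP1 HP3.
case: Hex => Hkc [_ [_ [_ [_ [_ [_ HE2op]]]]]].
have [D [iota [Hdir [HDi Hcol]]]] := proj1 (Hcoh T) HT.
have Hco := proj1 Hcol.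
have co1 : forall i j (p : dle D i j), acomp (m1 (iota j)) (m1 (dmap D p)) = m1 (iota i).
  by move=> i j p; have := congr1 m1 (Hco i j p).
have co2 : forall i j (p : dle D i j), acomp (m2 (iota j)) (m2 (dmap D p)) = m2 (iota i).
  by move=> i j p; have := congr1 m2 (Hco i j p).
have co3 : forall i j (p : dle D i j), acomp (m3 (iota j)) (m3 (dmap D p)) = m3 (iota i).
  by move=> i j p; have := congr1 m3 (Hco i j p).
have c1 := pl_col1 Hcol. have c3 := pl_col3 Hcol.
have d1 := pl_dir1 Hdir. have d3 := pl_dir3 Hdir.
have [i1 [s Hs]] := (proj1 (HP1 _ _ _ d1 c1)) (aid (t1 T)).
have [i2 [t Ht]] := (proj1 (HP3 _ _ _ d3 c3)) (aid (t3 T)).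
simpl in Hs, Ht.
have [k [p1 p2]] := pl_dir2 HK (proj2 Hdir) i1 i2.
set s' := acomp (m1 (dmap D p1)) s.
set t' := acomp (m3 (dmap D p2)) t.
have Hs' : acomp (m1 (iota k)) s' = aid (t1 T) by rewrite /s' acompA co1.
have Ht' : acomp (m3 (iota k)) t' = aid (t3 T) by rewrite /t' acompA co3.
have [HEk [HPk1 _]] := HDi k.
have [m [p [p' Hm]]] : exists m (p p' : dle D k m),
    acomp (m1 (dmap D p)) (acomp s' (m1 (iota k))) = acomp (m1 (dmap D p')) (aid _).
  apply: (proj2 (HPk1 _ _ _ d1 c1)).
  by rewrite /= acompA Hs' acomp1l acomp1.
simpl in Hm; rewrite acomp1 in Hm.
have HPm2 := (HDi m).2.2.1.

have [kerT cokT] := Hkc T HT.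
have [kerk _] := Hkc _ HEk.
have epik : adm_epi E (tg (dob D k)).
  by exists (t1 (dob D k)), (tf (dob D k)), (tz (dob D k)); rewrite -pl_tri_eta.
have [P [q [pp [[Hpb1 Hpb1u] Hq]]]] := HE2op _ _ _ (tg (dob D k)) t' epik.
have [Q [r1 [r2 [[Hpb2 Hpb2u] Hr1]]]] := HE2op _ _ _ q (tg T) Hq.
have [K0 [k0 [h0 HE0]]] := Hr1.
have [_ [cokr1a cokr1b]] := Hkc _ HE0.
simpl in cokr1a, cokr1b.
set a := m1 (iota k). set b := m2 (iota k). set c := m3 (iota k).
have Ef : acomp (tf T) a = acomp b (tf (dob D k)) := mc1 (iota k).
have Eg : acomp (tg T) b = acomp c (tg (dob D k)) := mc2 (iota k).
have [d [[Hd1 Hd2] _]] := Hpb2u P (acomp b pp) (aid P)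
   ltac:(by rewrite acomp1 acompA Eg -acompA -Hpb1 acompA Ht' acomp1l).
have [j [[Hj1 Hj2] _]] := Hpb2u _ (tf T) 0 ltac:(by rewrite (tz T) pl_acomp0r).
have fmono : forall W (u v : @aHom A W (t1 T)), acomp (tf T) u = acomp (tf T) v -> u = v.
  move=> W u v Huv.
  have [w [_ Hw]] := proj2 kerT W (acomp (tf T) u) ltac:(by rewrite acompA (tz T) pl_acomp0l).
  by rewrite (Hw u erefl) (Hw v (esym Huv)).
have [pi [Hpi _]] := proj2 kerT Q (acomp r1 (aid Q - acomp d r2)) ltac:(
  by rewrite acompA Hpb2 -acompA pl_acompBr acomp1 acompA Hd2 acomp1l GRing.subrr pl_acomp0r).

have Hpij : acomp pi j = aid (t1 T).
  apply: fmono; rewrite acomp1 acompA Hpi -acompA pl_acompBl acomp1l -acompA Hj2 pl_acomp0r GRing.subr0 Hj1 //.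
have [w [Hw _]] := proj2 kerk _ (acomp pp (acomp r2 k0)) ltac:(
  by rewrite acompA -Hpb1 -acompA (acompA q) -Hpb2 -acompA cokr1a !pl_acomp0r).
have Hpik0 : acomp pi k0 = - acomp a w.
  apply: fmono; rewrite pl_acompNr.
  rewrite acompA Hpi -acompA pl_acompBl acomp1l pl_acompBr cokr1a GRing.sub0r.
  congr (- _).
  rewrite -acompA acompA Hd1 -acompA -Hw acompA -Ef -acompA //.

set Theta := acomp (m2 (dmap D p')) (acomp pp r2)
   + acomp (tf (dob D m)) (acomp (m1 (dmap D p)) (acomp s' pi)).
have HTh : acomp Theta k0 = 0.
  rewrite /Theta acompDl -!acompA Hpik0 !pl_acompNr -Hw.
  have Hm' : forall W (v : @aHom A W (t1 (dob D k))),
     acomp (m1 (dmap D p)) (acomp (m1 (dmap D p1)) (acomp s (acomp a v))) = acomp (m1 (dmap D p')) v.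
    move=> W v; rewrite (acompA s) (acompA (m1 (dmap D p1))) (acompA (m1 (dmap D p))) (acompA (m1 (dmap D p1)) s) -/s'.
    congr acomp. by move: Hm; rewrite -/a.
  by rewrite Hm' (acompA (tf (dob D m))) (mc1 (dmap D p')) -acompA GRing.subrr.
have [psi [Hpsi _]] := cokr1b _ Theta HTh.
have Hpsif : acomp psi (tf T) = acomp (tf (dob D m)) (acomp (m1 (dmap D p)) s').
  rewrite -Hj1 acompA Hpsi /Theta acompDl -!acompA Hj2 !pl_acomp0r GRing.add0r Hpij acomp1 //.
set bm := m2 (iota m).
set delta := acomp bm psi - aid (t2 T).
have Hdf : acomp delta (tf T) = 0.
  rewrite /delta pl_acompBl acomp1l -acompA Hpsif acompA -(mc1 (iota m)) -acompA.
  rewrite (acompA (m1 (iota m))) co1 -/a Hs' acomp1 GRing.subrr //.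
have Hgb : acomp (tg T) (acomp bm psi) = tg T.
  have [u [_ Hu]] := cokr1b _ (acomp (tg T) r1) ltac:(by rewrite -acompA cokr1a pl_acomp0r).
  suff H : acomp (acomp (tg T) (acomp bm psi)) r1 = acomp (tg T) r1.
    by rewrite (Hu _ H) (Hu _ erefl).
  rewrite -!acompA Hpsi /Theta !acompDr !(acompA (tg T) bm) (mc2 (iota m)) -!acompA.
  rewrite (acompA (tg (dob D m)) (tf (dob D m))) (tz (dob D m)) pl_acomp0l !pl_acomp0r GRing.addr0.
  rewrite (acompA (tg (dob D m))) (mc2 (dmap D p')) -acompA acompA co3 -/c.
  rewrite (acompA (tg (dob D k)) pp) -Hpb1 -acompA acompA Ht' acomp1l -Hpb2 //.
have [eps [Heps _]] := proj2 cokT _ delta Hdf.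
have Hge : acomp (tg T) eps = 0.
  have [u [_ Hu]] := proj2 cokT _ (0 : @aHom A (t2 T) (t3 T)) ltac:(by rewrite pl_acomp0l).
  rewrite (Hu 0 ltac:(by rewrite pl_acomp0l)); apply: Hu.
  by rewrite -acompA Heps /delta pl_acompBr acomp1 Hgb GRing.subrr.
have Hdd : acomp delta delta = 0.
  by rewrite -Heps -acompA (acompA (tg T) eps) Hge pl_acomp0l pl_acomp0r.
have Hre : acomp (acomp (aid (t2 T) - delta) bm) psi = aid (t2 T).
  have Hbp : acomp bm psi = delta + aid (t2 T) by rewrite /delta GRing.subrK.
  have gen : forall x : @aHom A (t2 T) (t2 T), acomp x x = 0 ->
      acomp (aid (t2 T) - x) (x + aid (t2 T)) = aid (t2 T).
    move=> x Hx; rewrite acompDr !pl_acompBl !acomp1l !acomp1 Hx GRing.subr0 GRing.addrC GRing.subrK //.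
  by rewrite -acompA Hbp; apply: gen.
exact: (pl_presentable_retract Hre HPm2).
Qed.
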